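(* For any positive integers $r,k$, the set $D_{r,k}$ contains at least one non-zero integer.
   Context: For positive integers $v,b,r,k$, a $(v,b,r,k)$-configuration is a connected bipartite graph with $v$ vertices on one side, each of degree $r$, and $b$ vertices on the other side, each of degree $k$, containing no cycle of length $4$. By convention the empty graph (with $v=b=0$) is also regarded as a configuration. A tuple $(v,b,r,k)$ is configurable if a $(v,b,r,k)$-configuration exists. Let $\mathbb{N}_0=\{0,1,2,\dots\}$ and define $$D_{r,k}=\left\{d\in\mathbb{N}_0:\left(d\tfrac{k}{\gcd(r,k)},\,d\tfrac{r}{\gcd(r,k)},\,r,\,k\right)\text{ is configurable}\right\}.$$ *)

(* Defs.v *)
From mathcomp Require Import all_boot.
Set Implicit Arguments. Unset Strict Implicit. Unset Printing Implicit Defensive.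

(* A bipartite graph with point side 'I_v and line side 'I_b is given by its
   incidence (edge) relation inc p l. *)

Definition bip_adj (v b : nat) (inc : 'I_v -> 'I_b -> bool) : rel ('I_v + 'I_b) :=
  fun x y => match x, y with
             | inl p, inr l => inc p l
             | inr l, inl p => inc p l
             | _, _ => false
             end.

Definition bip_connected (v b : nat) (inc : 'I_v -> 'I_b -> bool) : Prop :=
  forall x y : 'I_v + 'I_b, connect (bip_adj inc) x y.

(* No cycle of length 4: a 4-cycle in a bipartite graph consists of two distinct
   points p1 p2 and two distinct lines l1 l2, all four incidences holding. *)
Definition no_C4 (v b : nat) (inc : 'I_v -> 'I_b -> bool) : Prop :=
  forall (p1 p2 : 'I_v) (l1 l2 : 'I_b),
    p1 != p2 -> l1 != l2 -> ~ [&& inc p1 l1, inc p1 l2, inc p2 l1 & inc p2 l2].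

(* (v,b,r,k)-configuration. For v = b = 0 (the empty graph) the conditions are
   vacuous, matching the convention that the empty graph is a configuration. *)
Definition is_configuration (v b r k : nat) (inc : 'I_v -> 'I_b -> bool) : Prop :=
  [/\ forall p : 'I_v, #|[set l | inc p l]| = r,
      forall l : 'I_b, #|[set p | inc p l]| = k,
      no_C4 inc & bip_connected inc].

Definition configurable (v b r k : nat) : Prop :=
  exists inc : 'I_v -> 'I_b -> bool, is_configuration r k inc.

Definition in_D (r k d : nat) : Prop :=
  configurable (d * (k %/ gcdn r k)) (d * (r %/ gcdn r k)) r k.

(* Main.v *)
Require Import Defs.
From mathcomp Require Import all_boot.
From mathcomp Require Import all_algebra ring.
Import GRing.Theory.
Set Implicit Arguments. Unset Strict Implicit.

Section Gen.
Variables (T U : finType) (inc : T -> U -> bool).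

Definition gadj : rel (T + U) :=
  fun x y => match x, y with
             | inl p, inr l => inc p l
             | inr l, inl p => inc p l
             | _, _ => false
             end.

Definition gconf (r k : nat) :=
  [/\ forall p, #|[set l | inc p l]| = r,
      forall l, #|[set p | inc p l]| = k,
      (forall p1 p2 l1 l2, p1 != p2 -> l1 != l2 ->
         ~~ [&& inc p1 l1, inc p1 l2, inc p2 l1 & inc p2 l2])
    & forall x y : T + U, connect gadj x y].

Definition sumf (x : 'I_#|T| + 'I_#|U|) : T + U :=
  match x with inl i => inl (enum_val i) | inr j => inr (enum_val j) end.
Definition sumg (x : T + U) : 'I_#|T| + 'I_#|U| :=
  match x with inl i => inl (enum_rank i) | inr j => inr (enum_rank j) end.

Lemma sumgK : cancel sumg sumf.
Proof. by case=> a /=; rewrite enum_rankK. Qed.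
Lemma sumfK : cancel sumf sumg.
Proof. by case=> a /=; rewrite enum_valK. Qed.

Lemma gadj_sym : connect_sym gadj.
Proof. by apply: sym_connect_sym; do 2 case=> ?. Qed.

Lemma transfer r k : gconf r k -> configurable #|T| #|U| r k.
Proof.
case=> Hp Hl HC Hc.
exists (fun i j => inc (enum_val i) (enum_val j)); split.
- move=> p; rewrite -(Hp (enum_val p)).
  have -> : [set l | inc (enum_val p) (enum_val l)] = enum_rank @: [set l | inc (enum_val p) l].
    apply/setP=> l; rewrite inE; apply/idP/imsetP.
      by move=> H; exists (enum_val l); rewrite ?inE ?enum_valK.
    by case=> l'; rewrite inE => H ->; rewrite enum_rankK.
  by rewrite card_imset //; apply: enum_rank_inj.
- move=> l; rewrite -(Hl (enum_val l)).
  have -> : [set p | inc (enum_val p) (enum_val l)] = enum_rank @: [set p | inc p (enum_val l)].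
    apply/setP=> p; rewrite inE; apply/idP/imsetP.
      by move=> H; exists (enum_val p); rewrite ?inE ?enum_valK.
    by case=> p'; rewrite inE => H ->; rewrite enum_rankK.
  by rewrite card_imset //; apply: enum_rank_inj.
- move=> p1 p2 l1 l2 h1 h2; apply/negP.
  by apply: HC; rewrite (inj_eq enum_val_inj).
- move=> x y; rewrite -(sumfK x) -(sumfK y).
  move: (Hc (sumf x) (sumf y)) => /connectP [s Hs ->].
  elim: s (sumf x) Hs => [|z s IH] a /=; first by rewrite connect0.
  case/andP=> Haz Hs; apply: connect_trans (IH _ Hs).
  apply: connect1; move: Haz; clear.
  by case: a => a; case: z => z //=; rewrite !enum_rankK.
Qed.
End Gen.

Lemma star1 k : 0 < k -> gconf (fun (_ : 'I_k) (_ : 'I_1) => true) 1 k.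
Proof.
move=> k0; split.
- by move=> p; rewrite (_ : [set _ | true] = setT) ?cardsT ?card_ord //; apply/setP=> ?; rewrite !inE.
- by move=> l; rewrite (_ : [set _ | true] = setT) ?cardsT ?card_ord //; apply/setP=> ?; rewrite !inE.
- by move=> p1 p2 l1 l2 _; rewrite !ord1.
- have H : forall x, connect (gadj (fun (_ : 'I_k) (_ : 'I_1) => true)) x (inr ord0).
    by case=> [a|b]; [apply: connect1 | rewrite ord1 connect0].
  move=> x y; apply: connect_trans (H x) _.
  by rewrite gadj_sym.
Qed.

Lemma star2 r : 0 < r -> gconf (fun (_ : 'I_1) (_ : 'I_r) => true) r 1.
Proof.
move=> r0; split.
- by move=> p; rewrite (_ : [set _ | true] = setT) ?cardsT ?card_ord //; apply/setP=> ?; rewrite !inE.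
- by move=> l; rewrite (_ : [set _ | true] = setT) ?cardsT ?card_ord //; apply/setP=> ?; rewrite !inE.
- by move=> p1 p2 l1 l2; rewrite !ord1.
- have H : forall x, connect (gadj (fun (_ : 'I_1) (_ : 'I_r) => true)) x (inl ord0).
    by case=> [a|b]; [rewrite ord1 connect0 | apply: connect1].
  move=> x y; apply: connect_trans (H x) _.
  by rewrite gadj_sym.
Qed.

Section Affine.
Variables (p r k : nat).
Hypotheses (pp : prime p) (r2 : 1 < r) (k2 : 1 < k) (rp : r < p) (kp : k < p).

Local Open Scope ring_scope.

Definition ainc (P : 'I_k * 'F_p) (L : 'I_r * 'F_p) : bool :=
  P.2 == (L.1)%:R * (P.1)%:R + L.2.

Lemma natF_inj (a b : nat) : (a < p)%N -> (b < p)%N -> ((a%:R : 'F_p) == b%:R) = (a == b).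
Proof.
move=> ha hb; apply/eqP/eqP => [h|->] //.
have := congr1 val h; rewrite /= !(val_Fp_nat pp) !modn_small //.
Qed.

Lemma aconf : gconf ainc r k.
Proof.
split.
- case=> x y.
  have -> : [set L | ainc (x, y) L] = [set (s, y - s%:R * x%:R) | s : 'I_r].
    apply/setP=> [[s c]]; rewrite inE /ainc /=; apply/eqP/imsetP.
      by move=> ->; exists s => //; congr pair; rewrite addrC addKr.
    by case=> s' _ [-> ->]; rewrite addrC subrK.
  rewrite card_imset ?card_ord //.
  by move=> a b [].
- case=> s c.
  have -> : [set P | ainc P (s, c)] = [set (x, s%:R * x%:R + c) | x : 'I_k].
    apply/setP=> [[x y]]; rewrite inE /ainc /=; apply/eqP/imsetP.
      by move=> ->; exists x.
    by case=> x' _ [-> ->].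
  rewrite card_imset ?card_ord //.
  by move=> a b [].
- case=> x1 y1 [x2 y2] [s1 c1] [s2 c2]; rewrite /ainc /= => hP hL.
  apply/negP; case/and4P=> /eqP e11 /eqP e12 /eqP e21 /eqP e22.
  have hd : ((s1%:R - s2%:R) * (x1%:R - x2%:R) : 'F_p) = 0.
    have : (y1 - y2) - (y1 - y2) = 0 by rewrite subrr.
    rewrite {1}e11 {1}e21 {1}e12 e22.
    move=> h; rewrite -h; ring.
  have lk (i : 'I_k) : (i < p)%N by exact: ltn_trans (ltn_ord _) kp.
  have lr (i : 'I_r) : (i < p)%N by exact: ltn_trans (ltn_ord _) rp.
  move/eqP: hd; rewrite mulf_eq0 !subr_eq0 !natF_inj //.
  case/orP=> /eqP h.
  + have hs : s1 = s2 by apply: val_inj.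
    move: hL; rewrite hs; apply/negP; rewrite negbK xpair_eqE eqxx /=.
    apply/eqP; rewrite hs e12 in e11; exact: (addrI _ (esym e11)).
  + have hx : x1 = x2 by apply: val_inj.
    move: hP; rewrite hx; apply/negP; rewrite negbK xpair_eqE eqxx /=.
    by rewrite e11 e21 hx.
- set e := gadj ainc.
  have x0lt : (0 < k)%N by exact: ltnW k2.
  have s0lt : (0 < r)%N by exact: ltnW r2.
  pose x0 : 'I_k := Ordinal x0lt; pose x1 : 'I_k := Ordinal k2.
  pose s0 : 'I_r := Ordinal s0lt; pose s1 : 'I_r := Ordinal r2.
  have step (a b : 'I_k * 'F_p) (L : 'I_r * 'F_p) :
      ainc a L -> ainc b L -> connect e (inl a) (inl b).
    move=> h1 h2; apply: (connect_trans (y:=inr L)); apply: connect1 => //.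
  have ha (x : 'I_k) (y : 'F_p) : connect e (inl (x, y)) (inl (x0, y)).
    by apply: (step _ _ (s0, y)); rewrite /ainc /= mul0r add0r.
  have hb (y : 'F_p) : connect e (inl (x0, y)) (inl (x0, y - 1)).
    apply: (connect_trans (y:=inl (x1, y))).
      by apply: (step _ _ (s0, y)); rewrite /ainc /= mul0r add0r.
    by apply: (step _ _ (s1, y - 1)); rewrite /ainc /= ?mul1r ?mulr0 ?add0r // addrC subrK.
  have hc (y : 'F_p) (n : nat) : connect e (inl (x0, y)) (inl (x0, y - n%:R)).
    elim: n => [|n IH]; first by rewrite subr0 connect0.
    apply: connect_trans IH _; rewrite -natr1 opprD addrA; exact: hb.
  have hd (y : 'F_p) : connect e (inl (x0, y)) (inl (x0, 0)).
    by have := hc y (val y); rewrite natr_Zp subrr.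
  have hub (v : ('I_k * 'F_p) + ('I_r * 'F_p)) : connect e v (inl (x0, 0)).
    case: v => [[x y]|[s c]].
      exact: connect_trans (ha x y) (hd y).
    apply: (connect_trans (y:=inl (x0, c))); last exact: hd.
    by apply: connect1; rewrite /e /= /ainc /= mulr0 add0r.
  move=> u v; apply: connect_trans (hub u) _.
  by rewrite gadj_sym.
Qed.
End Affine.

Theorem lemma3 (r k : nat) : 0 < r -> 0 < k -> exists d : nat, 0 < d /\ in_D r k d.
Proof.
move=> r0 k0.
have [r1|r2] := leqP r 1.
  have -> : r = 1 by apply/eqP; rewrite eqn_leq r1 r0.
  exists 1; split => //; rewrite /in_D gcd1n !divn1 !mul1n.
  by have := transfer (star1 k0); rewrite !card_ord.
have [k1|k2] := leqP k 1.
  have -> : k = 1 by apply/eqP; rewrite eqn_leq k1 k0.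
  exists 1; split => //; rewrite /in_D gcdn1 !divn1 !mul1n.
  by have := transfer (star2 r0); rewrite !card_ord.
case: (prime_above (maxn r k)) => p; rewrite gtn_max => /andP [rp kp] pp.
exists (gcdn r k * p); split.
  by rewrite muln_gt0 gcdn_gt0 r0 (prime_gt0 pp).
have := transfer (aconf pp r2 k2 rp kp); rewrite !card_prod !card_ord (Fp_cast pp).
have e1 : gcdn r k * p * (k %/ gcdn r k) = k * p.
  by rewrite mulnC mulnA divnK ?dvdn_gcdr.
have e2 : gcdn r k * p * (r %/ gcdn r k) = r * p.
  by rewrite mulnC mulnA divnK ?dvdn_gcdl.
by rewrite /in_D e1 e2.
Qed.
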